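(* Assume Assumptions 1 and 2 hold and $\Delta=\{\delta:\|\delta\|_2\le\varepsilon\}$. Let $S,S'$ be datasets of size $n$ differing in only one sample $s$, and consider coupled runs of $A_{\text{Vanilla}}$ on $S$ and $S'$ with iterates $w_t,w'_t$ and $d^{(w)}_t=\|w_t-w'_t\|$. Then for every step $t$, $$\mathbb E[d^{(w)}_t]\le(1+\alpha_{w,t}\beta)\mathbb E[d^{(w)}_{t-1}]+\frac{\alpha_{w,t}\beta}{n}\Big(2\varepsilon n+\frac{2L}{\beta}\Big).$$
   Context: Loss $h(w,\delta;z)$, $w\in W$ Euclidean, $\delta\in\Delta$, Euclidean norms. Assumption 1: for every $z$, and all $w,w'\in W$, $\delta,\delta'\in\Delta$: $|h(w,\delta;z)-h(w',\delta';z)|^2\le L^2(\|w-w'\|^2+\|\delta-\delta'\|^2)$ and $|h(w,\delta;z)-h(w',\delta;z)|\le L_w\|w-w'\|$. Assumption 2: for every $z$, $h(\cdot,\cdot;z)$ is continuously differentiable and $\|\nabla_w h(w,\delta;z)-\nabla_w h(w',\delta';z)\|^2+\|\nabla_\delta h(w,\delta;z)-\nabla_\delta h(w',\delta';z)\|^2\le\beta^2(\|w-w'\|^2+\|\delta-\delta'\|^2)$. Algorithm $A_{\text{Vanilla}}$: from $w_0$, for $t=1,\dots,T$: draw a uniformly random mini-batch $B_t\subset S$ of size $b$; for each $z_j\in B_t$ pick $\delta_j\in\arg\max_{\delta\in\Delta}h(w_{t-1},\delta;z_j)$; set $w_t=w_{t-1}-\frac{\alpha_{w,t}}{b}\sum_{z_j\in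 B_t}\nabla_w h(w_{t-1},\delta_j;z_j)$. Coupling: both runs use the same initialization and the same mini-batch index sets, so the batches differ only if they contain the index of $s$, which happens with probability $b/n$. Expectation is over the mini-batch randomness. *)

(* Defs.v *)
From HB Require Import structures.
From mathcomp Require Import all_boot all_order all_algebra.
From mathcomp Require Import all_classical all_reals all_analysis.
Set Implicit Arguments. Unset Strict Implicit. Unset Printing Implicit Defensive.
Import Order.TTheory GRing.Theory Num.Theory.
Import numFieldNormedType.Exports.
Local Open Scope ring_scope.

Section Defs.
Variable R : realType.

Definition dotv k (u v : 'rV[R]_k) : R := \sum_(i < k) u ord0 i * v ord0 i.
Definition enorm k (u : 'rV[R]_k) : R := Num.sqrt (\sum_(i < k) u ord0 i ^+ 2).

Definition batch (n b : nat) := {B : {set 'I_n} | #|B| == b}.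

Variables (p q n b : nat) (Z : Type).
(* one SGD step of A_Vanilla at step t: data S, selector of inner maximisers *)
Definition vstep (gw : 'rV[R]_p -> 'rV[R]_q -> Z -> 'rV[R]_p)
  (sel : 'rV[R]_p -> Z -> 'rV[R]_q) (alpha : nat -> R) (S : 'I_n -> Z)
  (t : nat) (w : 'rV[R]_p) (B : batch n b) : 'rV[R]_p :=
  w - (alpha t / b%:R) *: \sum_(j in val B) gw w (sel w (S j)) (S j).

(* iterate: runF k w [:: B_{k+1}; ...; B_{k+m}] performs steps k+1,...,k+m *)
Fixpoint runF gw sel alpha S (k : nat) (w : 'rV[R]_p) (bs : seq (batch n b))
  : 'rV[R]_p :=
  match bs with
  | [::] => w
  | B :: bs' => runF gw sel alpha S k.+1 (vstep gw sel alpha S k.+1 w B) bs'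
  end.

(* expectation of a functional of t independent uniform mini-batches *)
Definition Ebatch (t : nat) (f : seq (batch n b) -> R) : R :=
  (\sum_(bs : t.-tuple (batch n b)) f (tval bs)) / #|{: t.-tuple (batch n b)}|%:R.

End Defs.

(* Main.v *)
Require Import Defs.
From HB Require Import structures.
From mathcomp Require Import all_boot all_order all_algebra.
From mathcomp Require Import all_classical all_reals all_analysis.
From mathcomp Require Import fingroup perm.
From mathcomp Require Import lra ring.
Import Order.TTheory GRing.Theory Num.Theory.
Import numFieldNormedType.Exports.
Local Open Scope ring_scope.
Module M_A.
Set Implicit Arguments. Unset Strict Implicit.

Section Enorm.
Variable R : realType.
Variable k : nat.
Implicit Types u v : 'rV[R]_k.

Definition ss u := \sum_(i < k) u ord0 i ^+ 2.

Lemma ss_ge0 u : 0 <= ss u.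
Proof. by apply: sumr_ge0 => i _; exact: sqr_ge0. Qed.

Lemma enorm_ge0 u : 0 <= enorm u.
Proof. exact: sqrtr_ge0. Qed.

Lemma enorm_sq u : enorm u ^+ 2 = ss u.
Proof. by rewrite /enorm sqr_sqrtr // ss_ge0. Qed.

Lemma sq_le (x y : R) : x ^+ 2 <= y ^+ 2 -> 0 <= y -> x <= y.
Proof. move=> H Hy; rewrite !expr2 in H; nra. Qed.

Lemma dotvv u : dotv u u = ss u.
Proof. by apply: eq_bigr => i _; rewrite expr2. Qed.

Lemma CS u v : dotv u v ^+ 2 <= ss u * ss v.
Proof.
have E1 : dotv u v ^+ 2 = \sum_(i < k) \sum_(j < k)
   (u ord0 i * v ord0 i) * (u ord0 j * v ord0 j).
  by rewrite expr2 /dotv mulr_suml; apply: eq_bigr => i _; rewrite mulr_sumr.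
have E2 : ss u * ss v = \sum_(i < k) \sum_(j < k)
   (u ord0 i ^+ 2 * v ord0 j ^+ 2).
  by rewrite /ss mulr_suml; apply: eq_bigr => i _; rewrite mulr_sumr.
have E3 : ss u * ss v = \sum_(i < k) \sum_(j < k)
   (u ord0 j ^+ 2 * v ord0 i ^+ 2).
  rewrite mulrC /ss mulr_suml; apply: eq_bigr => i _; rewrite mulr_sumr.
  by apply: eq_bigr => j _; rewrite mulrC.
suff : 2 * dotv u v ^+ 2 <= ss u * ss v + ss u * ss v by lra.
rewrite {1}E2 E3 -big_split /= E1 mulr_sumr.
apply: ler_sum => i _; rewrite mulr_sumr -big_split /=.
apply: ler_sum => j _.
set a := u ord0 i; set b := v ord0 i; set c := u ord0 j; set d := v ord0 j.
have := sqr_ge0 (a * d - c * b); rewrite !expr2; nra.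
Qed.

Lemma dotv_le u v : dotv u v <= enorm u * enorm v.
Proof.
apply: sq_le; last by rewrite mulr_ge0 // enorm_ge0.
by rewrite exprMn !enorm_sq CS.
Qed.

Lemma ss_add u v : ss (u + v) = ss u + 2 * dotv u v + ss v.
Proof.
rewrite /ss /dotv mulr_sumr -!big_split /=; apply: eq_bigr => i _.
rewrite mxE; rewrite !expr2; lra.
Qed.

Lemma enorm_triangle u v : enorm (u + v) <= enorm u + enorm v.
Proof.
apply: sq_le; last by rewrite addr_ge0 // enorm_ge0.
rewrite enorm_sq ss_add sqrrD !enorm_sq.
have := dotv_le u v; lra.
Qed.

Lemma ss_scale (a : R) u : ss (a *: u) = a ^+ 2 * ss u.
Proof.
rewrite /ss mulr_sumr; apply: eq_bigr => i _; rewrite mxE exprMn //.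
Qed.

Lemma enorm_scale (a : R) u : enorm (a *: u) = `|a| * enorm u.
Proof.
by rewrite /enorm -/(ss _) ss_scale sqrtrM ?sqr_ge0 // sqrtr_sqr.
Qed.

Lemma enormN u : enorm (- u) = enorm u.
Proof. by rewrite -scaleN1r enorm_scale normrN normr1 mul1r. Qed.

Lemma enorm0 : enorm (0 : 'rV[R]_k) = 0.
Proof. by rewrite -(scale0r (0 : 'rV[R]_k)) enorm_scale normr0 mul0r. Qed.

Lemma enormB u v : enorm (u - v) <= enorm u + enorm v.
Proof. by rewrite -(enormN v) enorm_triangle. Qed.

Lemma enorm_sum (I : finType) (P : pred I) (F : I -> 'rV[R]_k) :
  enorm (\sum_(i | P i) F i) <= \sum_(i | P i) enorm (F i).
Proof.
elim/big_rec2: _ => [|i y1 y2 _ H]; first by rewrite enorm0.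
by apply: le_trans (enorm_triangle _ _) _; rewrite lerD2l.
Qed.

End Enorm.

End M_A.
Import M_A.

Module M_B.
Set Implicit Arguments. Unset Strict Implicit.

Lemma grad_bound (R : realType) (p q : nat) (Z : Type)
  (h : 'rV[R]_p -> 'rV[R]_q -> Z -> R)
  (gw : 'rV[R]_p -> 'rV[R]_q -> Z -> 'rV[R]_p)
  (gd : 'rV[R]_p -> 'rV[R]_q -> Z -> 'rV[R]_q) (L : R) :
  0 <= L ->
  (forall z w w' d d', (h w d z - h w' d' z) ^+ 2 <=
      L ^+ 2 * (enorm (w - w') ^+ 2 + enorm (d - d') ^+ 2)) ->
  (forall z w d, differentiable (fun x : 'rV[R]_p * 'rV[R]_q => h x.1 x.2 z) (w, d)) ->
  (forall z w d u v,
      'D_(u, v) (fun x : 'rV[R]_p * 'rV[R]_q => h x.1 x.2 z) (w, d)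
        = dotv (gw w d z) u + dotv (gd w d z) v) ->
  forall z w d, enorm (gw w d z) <= L.
Proof.
move=> L0 HL Hdiff HD z w d.
set g := gw w d z.
have key : enorm g ^+ 2 <= L * enorm g.
  have E0 : dotv (gd w d z) 0 = 0.
    by rewrite /dotv big1 // => i _; rewrite [X in _ * X]mxE mulr0.
  have := HD z w d g 0.
  rewrite E0 addr0 dotvv -enorm_sq => <-.
  rewrite /derive.
  apply: limr_le.
    exact: diff_derivable.
  apply: nearW => x /=.
  rewrite scaler0 add0r.
  have Hb : `|h (x *: g + w) d z - h w d z| <= L * (`|x| * enorm g).
    apply: sq_le; last by rewrite mulr_ge0 ?mulr_ge0 ?enorm_ge0.
    rewrite real_normK ?num_real // (le_trans (HL _ _ _ _ _)) //.
    by rewrite addrK subrr enorm0 expr0n /= addr0 enorm_scale !exprMn.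
  have -> : x^-1 *: (h (x *: g + w) d z - h w d z) = x^-1 * (h (x *: g + w) d z - h w d z) by [].
  apply: le_trans (ler_norm _) _.
  rewrite normrM normfV.
  have [->|x0] := eqVneq x 0.
    by rewrite normr0 invr0 mul0r mulr_ge0 ?enorm_ge0.
  apply: le_trans (ler_wpM2l _ Hb) _; first by rewrite invr_ge0.
  by rewrite mulrCA mulKf ?normr_eq0.

have := enorm_ge0 g; rewrite expr2 in key; nra.
Qed.

End M_B.
Import M_B.

Module M_C.
Set Implicit Arguments. Unset Strict Implicit.

Definition permB n b (s : {perm 'I_n}) (B : batch n b) : batch n b.
Proof.
exists (s @: val B); rewrite card_imset; [exact: (valP B)|exact: perm_inj].
Defined.

Lemma permB_inj n b (s : {perm 'I_n}) : injective (@permB n b s).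
Proof.
move=> B1 B2 /(congr1 val) /= E; apply: val_inj.
exact: (imset_inj (@perm_inj _ s)).
Qed.

Lemma count_batch n b (i0 : 'I_n) :
  ((\sum_(B : batch n b) (i0 \in val B : nat)) * n = b * #|{: batch n b}|)%N.
Proof.
have E1 : (\sum_(B : batch n b) #|val B| = b * #|{: batch n b}|)%N.
  rewrite (eq_bigr (fun _ => b)); last by move=> B _; exact/eqP/(valP B).
  by rewrite sum_nat_const mulnC cardT.
have E2 : forall B : batch n b, #|val B| = (\sum_(i < n) (i \in val B : nat))%N.
  by move=> B; rewrite -sum1_card big_mkcond /=; apply: eq_bigr => i _; case: (i \in val B).
rewrite -E1 (eq_bigr _ (fun B _ => E2 B)) exchange_big /=.
rewrite (eq_bigr (fun _ => \sum_(B : batch n b) (i0 \in val B : nat))%N).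
  by rewrite sum_nat_const card_ord mulnC.
move=> i _; rewrite (reindex_inj (@permB_inj n b (tperm i0 i))) /=.
apply: eq_bigr => B _ /=.
by rewrite -{1}(tpermL i0 i) mem_imset //; exact: perm_inj.
Qed.

Lemma card_batch_gt0 n b : (b <= n)%N -> (0 < #|{: batch n b}|)%N.
Proof.
move=> bn; rewrite card_sig.
have -> : #|[pred x : {set 'I_n} | #|x| == b]| = #|[set A : {set 'I_n} | #|A| == b]|.
  by apply: eq_card => A; rewrite inE.
by rewrite card_draws card_ord bin_gt0.
Qed.

End M_C.
Import M_C.

Module M_D.
Set Implicit Arguments. Unset Strict Implicit.

Lemma sum_tuple_rcons (T : finType) (V : nmodType) t (F : seq T -> V) :
  \sum_(s : t.+1.-tuple T) F s = \sum_(s : t.-tuple T) \sum_(x : T) F (rcons s x).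
Proof.
rewrite pair_big /=.
pose f (p : t.-tuple T * T) : t.+1.-tuple T := [tuple of rcons p.1 p.2].
pose g (s : t.+1.-tuple T) : t.-tuple T * T :=
  ([tuple of belast (thead s) (behead s)], last (thead s) (behead s)).
have fg : cancel g f.
  move=> s; apply: val_inj => /=; rewrite -lastI.
  by rewrite [in RHS](tuple_eta s).
have gf : cancel f g.
  move=> [bs B]; rewrite /g /f.
  set s := [tuple of rcons bs B].
  have E : rcons bs B = rcons (belast (thead s) (behead s)) (last (thead s) (behead s)).
    by rewrite -lastI -[RHS]/(val [tuple of thead s :: behead s]) -tuple_eta.
  case/rcons_inj: E => E1 E2.
  by congr (_, _); [apply: val_inj; rewrite /= -E1|rewrite -E2].
rewrite (reindex f) //=; exists g => x _; [exact: gf|exact: fg].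
Qed.

Lemma runF_rcons (R : realType) p q n b Z gw sel alpha (S : 'I_n -> Z) k (w : 'rV[R]_p)
  (bs : seq (batch n b)) B :
  runF (q:=q) gw sel alpha S k w (rcons bs B) =
  vstep gw sel alpha S (k + size bs).+1 (runF gw sel alpha S k w bs) B.
Proof.
elim: bs k w => [|B' bs IH] k w /=; first by rewrite addn0.
by rewrite IH addSnnS.
Qed.

End M_D.
Import M_D.

Lemma sum_ind (R : realType) n (A : {set 'I_n}) (i0 : 'I_n) :
  \sum_(j in A) ((j == i0)%:R : R) = (i0 \in A)%:R.
Proof.
case: (boolP (i0 \in A)) => H.
  rewrite (bigD1 i0) //= eqxx big1 ?addr0 // => j /andP [_ /negbTE ->] //.
by rewrite big1 // => j jA; case: eqP => // E; rewrite -E jA in H.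
Qed.

Theorem lemma4 (R : realType) (p q n b : nat) (Z : Type)
  (h : 'rV[R]_p -> 'rV[R]_q -> Z -> R)
  (gw : 'rV[R]_p -> 'rV[R]_q -> Z -> 'rV[R]_p)
  (gd : 'rV[R]_p -> 'rV[R]_q -> Z -> 'rV[R]_q)
  (L Lw beta eps : R) (alpha : nat -> R)
  (sel : 'rV[R]_p -> Z -> 'rV[R]_q)
  (Sd Sd' : 'I_n -> Z) (i0 : 'I_n) (w0 : 'rV[R]_p) :
  (* constants *)
  0 <= L -> 0 < beta -> (forall t, 0 <= alpha t) ->
  (0 < b)%N -> (b <= n)%N ->
  (* Assumption 1 *)
  (forall z w w' d d', (h w d z - h w' d' z) ^+ 2 <=
      L ^+ 2 * (enorm (w - w') ^+ 2 + enorm (d - d') ^+ 2)) ->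
  (forall z w w' d, `|h w d z - h w' d z| <= Lw * enorm (w - w')) ->
  (* Assumption 2: h(.,.;z) is C^1 with gradients gw, gd, Lipschitz gradients *)
  (forall z w d, differentiable (fun x : 'rV[R]_p * 'rV[R]_q => h x.1 x.2 z) (w, d)) ->
  (forall z w d u v,
      'D_(u, v) (fun x : 'rV[R]_p * 'rV[R]_q => h x.1 x.2 z) (w, d)
        = dotv (gw w d z) u + dotv (gd w d z) v) ->
  (forall z, continuous (fun x : 'rV[R]_p * 'rV[R]_q => (gw x.1 x.2 z, gd x.1 x.2 z))) ->
  (forall z w w' d d',
      enorm (gw w d z - gw w' d' z) ^+ 2 + enorm (gd w d z - gd w' d' z) ^+ 2 <=
      beta ^+ 2 * (enorm (w - w') ^+ 2 + enorm (d - d') ^+ 2)) ->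
  (* Delta = Euclidean ball of radius eps; sel picks an inner maximiser *)
  (forall w z, enorm (sel w z) <= eps /\
     forall d, enorm d <= eps -> h w d z <= h w (sel w z) z) ->
  (* S and S' differ only in the sample at index i0 *)
  (forall i, i != i0 -> Sd i = Sd' i) ->
  forall t : nat,
    Ebatch t.+1 (fun bs : seq (batch n b) => enorm (runF gw sel alpha Sd 0 w0 bs - runF gw sel alpha Sd' 0 w0 bs))
    <= (1 + alpha t.+1 * beta) *
         Ebatch t (fun bs : seq (batch n b) => enorm (runF gw sel alpha Sd 0 w0 bs - runF gw sel alpha Sd' 0 w0 bs))
       + (alpha t.+1 * beta / n%:R) * (2 * eps * n%:R + 2 * L / beta).
Proof.
move=> L0 beta0 alpha0 b0 bn HL _ Hdiff HD _ Hgrad Hsel HS t.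
have Gb := @grad_bound _ _ _ _ h gw gd L L0 HL Hdiff HD.
set a := alpha t.+1.
have a0 : 0 <= a by exact: alpha0.
have eps0 : 0 <= eps.
  by have [H _] := Hsel w0 (Sd i0); exact: le_trans (enorm_ge0 _) H.
set K := a * beta / n%:R * (2 * eps * n%:R + 2 * L / beta).
set N := #|{: batch n b}|.
have N0 : (0 < N)%N by exact: card_batch_gt0.
have n0 : (0 < n)%N by exact: leq_trans bn.
have Nr0 : 0 < (N%:R : R) by rewrite ltr0n.
have nr0 : 0 < (n%:R : R) by rewrite ltr0n.
have br0 : 0 < (b%:R : R) by rewrite ltr0n.
have Hj : forall (w w' : 'rV[R]_p) (j : 'I_n),
    enorm (gw w (sel w (Sd j)) (Sd j) - gw w' (sel w' (Sd' j)) (Sd' j))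
    <= beta * (enorm (w - w') + 2 * eps) + (j == i0)%:R * (2 * L).
  move=> w w' j.
  have d0 := enorm_ge0 (w - w').
  case: eqP => [_|/eqP jn].
    rewrite mul1r; apply: le_trans (enormB _ _) _.
    have := Gb (Sd j) w (sel w (Sd j)); have := Gb (Sd' j) w' (sel w' (Sd' j)).
    have : 0 <= beta * (enorm (w - w') + 2 * eps) by apply: mulr_ge0; [exact: ltW|rewrite addr_ge0 ?enorm_ge0 ?mulr_ge0].
    lra.
  rewrite /= mul0r addr0 -(HS j jn).
  set z := Sd j.
  have He : enorm (sel w z - sel w' z) <= 2 * eps.
    apply: le_trans (enormB _ _) _.
    have [H1 _] := Hsel w z; have [H2 _] := Hsel w' z; lra.
  have e0 := enorm_ge0 (sel w z - sel w' z).
  have := Hgrad z w w' (sel w z) (sel w' z).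
  have := sqr_ge0 (enorm (gd w (sel w z) z - gd w' (sel w' z) z)).
  move=> H0 H; apply: sq_le; last by apply: mulr_ge0; [exact: ltW|rewrite addr_ge0 ?enorm_ge0 ?mulr_ge0].
  apply: le_trans (_ : beta ^+ 2 * (enorm (w - w') ^+ 2 + enorm (sel w z - sel w' z) ^+ 2) <= _).
    lra.
  rewrite exprMn ler_wpM2l ?sqr_ge0 //.
  rewrite !expr2; nra.
have HB : forall (w w' : 'rV[R]_p) (B : batch n b),
    enorm (vstep gw sel alpha Sd t.+1 w B - vstep gw sel alpha Sd' t.+1 w' B)
    <= enorm (w - w') + a / b%:R * (b%:R * (beta * (enorm (w - w') + 2 * eps))
          + (i0 \in val B)%:R * (2 * L)).
  move=> w w' B.
  rewrite /vstep -/a.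
  set c := a / b%:R.
  have c0 : 0 <= c by rewrite divr_ge0 // ltW.
  set X := \sum_(j in val B) _.
  set X' := \sum_(j in val B) _.
  rewrite opprD opprK addrACA (addrC (- _)) -scalerBr -[X' - X]opprB scalerN.
  apply: le_trans (enormB _ _) _; rewrite lerD2l.
  rewrite enorm_scale ger0_norm // ler_wpM2l //.
  rewrite -sumrB; apply: le_trans (enorm_sum _ _) _.
  apply: le_trans (ler_sum _ (fun j _ => Hj w w' j)) _.
  rewrite big_split /= sumr_const -mulr_suml sum_ind.
  by have Hc : #|sval B| = b := eqP (valP B); rewrite Hc (mulr_natl (beta * _) b).
have HBsum : forall (w w' : 'rV[R]_p),
    \sum_(B : batch n b) enorm (vstep gw sel alpha Sd t.+1 w B - vstep gw sel alpha Sd' t.+1 w' B)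
    <= N%:R * ((1 + a * beta) * enorm (w - w') + K).
  move=> w w'.
  apply: le_trans (ler_sum _ (fun B _ => HB w w' B)) _.
  rewrite big_split /= sumr_const -mulr_sumr big_split /= sumr_const -mulr_suml.
  have CB := count_batch b i0.
  have HSum : \sum_(B : batch n b) ((i0 \in val B)%:R : R) = b%:R * N%:R / n%:R.
    apply: (mulIf (lt0r_neq0 nr0)); rewrite mulfVK ?lt0r_neq0 //.
    by rewrite -natr_sum -natrM -natrM CB.
  rewrite HSum (_ : #|_| = N); last by apply: eq_card.
  rewrite -[enorm _ *+ N]mulr_natl -[_ *+ N]mulr_natl.
  rewrite le_eqVlt; apply/orP; left; apply/eqP; rewrite /K.
  have nz1 := lt0r_neq0 nr0; have nz2 := lt0r_neq0 br0; have nz3 := lt0r_neq0 beta0.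
  by field; rewrite nz1 nz2 nz3.
rewrite /Ebatch.
set F := fun bs : seq (batch n b) => enorm (runF gw sel alpha Sd 0 w0 bs - runF gw sel alpha Sd' 0 w0 bs).
rewrite (sum_tuple_rcons t F).
have Hs : forall s : t.-tuple (batch n b),
    \sum_(x : batch n b) F (rcons s x) <= N%:R * ((1 + a * beta) * F s + K).
  move=> s; rewrite /F.
  under eq_bigr do rewrite !runF_rcons size_tuple add0n.
  exact: HBsum.
have Mr0 : 0 < (#|{: t.-tuple (batch n b)}|%:R : R) by rewrite ltr0n card_tuple expn_gt0 N0.
have Ec : (#|{: t.+1.-tuple (batch n b)}|%:R : R) = N%:R * #|{: t.-tuple (batch n b)}|%:R.
  by rewrite !card_tuple expnS natrM.
rewrite Ec.
rewrite ler_pdivrMr ?mulr_gt0 //.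
apply: le_trans (ler_sum _ (fun s _ => Hs s)) _.
rewrite -mulr_sumr big_split /= -mulr_sumr sumr_const -mulr_natl.
rewrite le_eqVlt; apply/orP; left; apply/eqP.
have nz1 := lt0r_neq0 Mr0; have nz2 := lt0r_neq0 Nr0.
set M := #|{: t.-tuple (batch n b)}|.
rewrite -[K *+ M]mulr_natl /F /=.
field; by rewrite nz1.
Qed.
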